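(* Let $\mathcal{S}$ be an elementary topos with subobject classifier $\mathit{2}$ (not necessarily Boolean), and let $p : \mathcal{E} \rightarrow \mathcal{S}$ be a pre-cohesive geometric morphism with $p_! \dashv p^* \dashv p_* \dashv p^!$. For every morphism $f : W \rightarrow X$ in $\mathcal{E}$, the following are equivalent: (1) $f$ is internally orthogonal to $p^* \mathit{2}$; (2) $p_! f : p_! W \rightarrow p_! X$ is an isomorphism in $\mathcal{S}$; (3) for every object $A$ of $\mathcal{S}$, $f$ is internally orthogonal to $p^* A$.
   Context: A geometric morphism $p : \mathcal{E} \rightarrow \mathcal{S}$ is pre-cohesive if it is local ($p_*$ has a fully faithful right adjoint $p^!$), hyperconnected (unit and counit of $p^* \dashv p_*$ are monic), and $p^*$ has a finite-product preserving left adjoint $p_!$. A morphism $f : W \rightarrow X$ is internally orthogonal to an object $Z$ if $Z^f : Z^X \rightarrow Z^W$ is an isomorphism. *)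

(* Defs.v *)
Set Implicit Arguments.
Unset Strict Implicit.

Record Category := {
  Ob :> Type;
  Hom : Ob -> Ob -> Type;
  idm : forall A : Ob, Hom A A;
  comp : forall A B C : Ob, Hom B C -> Hom A B -> Hom A C;
  comp_id_l : forall A B (f : Hom A B), comp (idm B) f = f;
  comp_id_r : forall A B (f : Hom A B), comp f (idm A) = f;
  comp_assoc : forall A B C D (h : Hom C D) (g : Hom B C) (f : Hom A B),
      comp h (comp g f) = comp (comp h g) f
}.
Arguments Hom {c} _ _.
Arguments idm {c} _.
Arguments comp {c A B C} _ _.

Notation "g \o f" := (comp g f) (at level 40, left associativity).

Section Basic.
Context {C : Category}.

Definition is_iso {A B : C} (f : Hom A B) : Prop :=
  exists g : Hom B A, g \o f = idm A /\ f \o g = idm B.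

Definition is_mono {A B : C} (f : Hom A B) : Prop :=
  forall (Z : C) (a b : Hom Z A), f \o a = f \o b -> a = b.

Definition is_terminal (T : C) : Prop :=
  forall A : C, exists! h : Hom A T, True.

Definition is_product {A B P : C} (q1 : Hom P A) (q2 : Hom P B) : Prop :=
  forall (Z : C) (f : Hom Z A) (g : Hom Z B),
    exists! h : Hom Z P, q1 \o h = f /\ q2 \o h = g.

Definition is_pullback {A B X P : C} (f : Hom A X) (g : Hom B X)
    (p : Hom P A) (q : Hom P B) : Prop :=
  f \o p = g \o q /\
  forall (Z : C) (a : Hom Z A) (b : Hom Z B), f \o a = g \o b ->
    exists! h : Hom Z P, p \o h = a /\ q \o h = b.
End Basic.

Record Topos := {
  tcat :> Category;
  one : tcat;
  one_terminal : is_terminal one;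
  prod : tcat -> tcat -> tcat;
  pr1 : forall A B : tcat, Hom (prod A B) A;
  pr2 : forall A B : tcat, Hom (prod A B) B;
  prod_is_product : forall A B : tcat, is_product (pr1 A B) (pr2 A B);
  has_pullbacks : forall (A B X : tcat) (f : Hom A X) (g : Hom B X),
      exists (P : tcat) (p : Hom P A) (q : Hom P B), is_pullback f g p q;
  (* exp B Z is the exponential Z^B *)
  exp : tcat -> tcat -> tcat;
  ev : forall B Z : tcat, Hom (prod (exp B Z) B) Z;
  exp_universal : forall (A B Z : tcat) (g : Hom (prod A B) Z),
      exists! h : Hom A (exp B Z),
        forall (k : Hom (prod A B) (prod (exp B Z) B)),
          pr1 _ _ \o k = h \o pr1 _ _ -> pr2 _ _ \o k = pr2 _ _ ->
          ev B Z \o k = g;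
  Omega : tcat;
  tru : Hom one Omega;
  classifier : forall (U X : tcat) (m : Hom U X), is_mono m ->
      exists! chi : Hom X Omega,
        forall t : Hom U one, is_pullback chi tru m t
}.
Arguments one {t}.
Arguments prod {t} _ _.
Arguments pr1 {t} _ _.
Arguments pr2 {t} _ _.
Arguments exp {t} _ _.
Arguments ev {t} _ _.
Arguments Omega {t}.
Arguments tru {t}.

Record Functor (C D : Category) := {
  fobj :> C -> D;
  fmap : forall A B : C, Hom A B -> Hom (fobj A) (fobj B);
  fmap_id : forall A : C, fmap (idm A) = idm (fobj A);
  fmap_comp : forall A B X (g : Hom B X) (f : Hom A B),
      fmap (g \o f) = fmap g \o fmap f
}.
Arguments fmap {C D} _ {A B} _.

Record Adjunction {C D : Category} (F : Functor C D) (G : Functor D C) := {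
  unit : forall A : C, Hom A (G (F A));
  counit : forall B : D, Hom (F (G B)) B;
  unit_nat : forall A A' (f : Hom A A'),
      fmap G (fmap F f) \o unit A = unit A' \o f;
  counit_nat : forall B B' (g : Hom B B'),
      g \o counit B = counit B' \o fmap F (fmap G g);
  triangle_F : forall A : C, counit (F A) \o fmap F (unit A) = idm (F A);
  triangle_G : forall B : D, fmap G (counit B) \o unit (G B) = idm (G B)
}.
Arguments unit {C D F G} _ _.
Arguments counit {C D F G} _ _.

Definition fully_faithful {C D : Category} (F : Functor C D) : Prop :=
  forall A B : C,
    (forall f g : Hom A B, fmap F f = fmap F g -> f = g) /\
    (forall h : Hom (F A) (F B), exists f : Hom A B, fmap F f = h).

Definition preserves_terminal {C D : Category} (F : Functor C D) : Prop :=
  forall T : C, is_terminal T -> is_terminal (F T).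

Definition preserves_binary_products {C D : Category} (F : Functor C D) : Prop :=
  forall (A B P : C) (q1 : Hom P A) (q2 : Hom P B),
    is_product q1 q2 -> is_product (fmap F q1) (fmap F q2).

Definition preserves_finite_products {C D : Category} (F : Functor C D) : Prop :=
  preserves_terminal F /\ preserves_binary_products F.

Definition preserves_pullbacks {C D : Category} (F : Functor C D) : Prop :=
  forall (A B X P : C) (f : Hom A X) (g : Hom B X) (p : Hom P A) (q : Hom P B),
    is_pullback f g p q -> is_pullback (fmap F f) (fmap F g) (fmap F p) (fmap F q).

Definition left_exact {C D : Category} (F : Functor C D) : Prop :=
  preserves_terminal F /\ preserves_pullbacks F.

Definition pre_cohesive {E S : Topos}
    (pl : Functor E S) (pu : Functor S E) (ps : Functor E S) (pb : Functor S E)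
    (a1 : Adjunction pl pu) (a2 : Adjunction pu ps) (a3 : Adjunction ps pb) : Prop :=
  (* geometric morphism: the inverse image p^* is left exact *)
  left_exact pu /\
  (* local: p_* has a fully faithful right adjoint p^! *)
  fully_faithful pb /\
  (* hyperconnected: unit and counit of p^* -| p_* are monic *)
  (forall A : S, is_mono (unit a2 A)) /\
  (forall X : E, is_mono (counit a2 X)) /\
  preserves_finite_products pl.

Section Orth.
Context {T : Topos}.

(** [u : Z^X -> Z^W] is the map [Z^f] (precomposition with [f : W -> X]),
    i.e. the exponential transpose of
    [Z^X x W --(id x f)--> Z^X x X --ev--> Z].
    Here [k] ranges over (the unique) [u x id_W] and [l] over [id x f]. *)
Definition is_exp_precomp {W X : T} (Z : T) (f : Hom W X)
    (u : Hom (exp X Z) (exp W Z)) : Prop :=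
  forall (k : Hom (prod (exp X Z) W) (prod (exp W Z) W))
         (l : Hom (prod (exp X Z) W) (prod (exp X Z) X)),
    pr1 _ _ \o k = u \o pr1 _ _ -> pr2 _ _ \o k = pr2 _ _ ->
    pr1 _ _ \o l = pr1 _ _ -> pr2 _ _ \o l = f \o pr2 _ _ ->
    ev W Z \o k = ev X Z \o l.

Definition internally_orthogonal {W X : T} (f : Hom W X) (Z : T) : Prop :=
  exists u : Hom (exp X Z) (exp W Z), is_exp_precomp (Z:=Z) f u /\ is_iso u.
End Orth.

(* Main.v *)
Require Import Defs.
From Stdlib Require Import ClassicalEpsilon.

Ltac assocL := repeat rewrite comp_assoc.

Section Top.
Context {T : Topos}.

Definition bang (A : T) : Hom A one :=
  proj1_sig (constructive_indefinite_description _ (one_terminal A)).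

Lemma bang_uniq (A : T) (h h' : Hom A one) : h = h'.
Proof.
  destruct (one_terminal A) as [x [_ U]].
  rewrite <- (U h I), <- (U h' I). reflexivity.
Qed.

Definition pair {A B Z : T} (f : Hom Z A) (g : Hom Z B) : Hom Z (prod A B) :=
  proj1_sig (constructive_indefinite_description _ (prod_is_product f g)).

Lemma pair1 {A B Z : T} (f : Hom Z A) (g : Hom Z B) : pr1 A B \o pair f g = f.
Proof. unfold pair. destruct (proj2_sig (constructive_indefinite_description _ (prod_is_product f g))) as [[H1 H2] _]. exact H1. Qed.
Lemma pair2 {A B Z : T} (f : Hom Z A) (g : Hom Z B) : pr2 A B \o pair f g = g.
Proof. unfold pair. destruct (proj2_sig (constructive_indefinite_description _ (prod_is_product f g))) as [[H1 H2] _]. exact H2. Qed.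

Lemma prod_ext {A B Z : T} (h h' : Hom Z (prod A B)) :
  pr1 A B \o h = pr1 A B \o h' -> pr2 A B \o h = pr2 A B \o h' -> h = h'.
Proof.
  intros E1 E2.
  destruct (prod_is_product (pr1 A B \o h) (pr2 A B \o h)) as [x [_ U]].
  rewrite <- (U h (conj eq_refl eq_refl)), <- (U h' (conj (eq_sym E1) (eq_sym E2))).
  reflexivity.
Qed.

Definition mapx {A A' B B' : T} (a : Hom A A') (b : Hom B B') :
  Hom (prod A B) (prod A' B') := pair (a \o pr1 A B) (b \o pr2 A B).

Lemma mapx1 {A A' B B' : T} (a : Hom A A') (b : Hom B B') :
  pr1 A' B' \o mapx a b = a \o pr1 A B.
Proof. apply pair1. Qed.
Lemma mapx2 {A A' B B' : T} (a : Hom A A') (b : Hom B B') :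
  pr2 A' B' \o mapx a b = b \o pr2 A B.
Proof. apply pair2. Qed.

Lemma mapx_comp {A A' A'' B B' B'' : T} (a : Hom A' A'') (b : Hom B' B'')
  (a' : Hom A A') (b' : Hom B B') :
  mapx a b \o mapx a' b' = mapx (a \o a') (b \o b').
Proof.
  apply prod_ext.
  - rewrite comp_assoc, !mapx1, <- comp_assoc, mapx1, comp_assoc. reflexivity.
  - rewrite comp_assoc, !mapx2, <- comp_assoc, mapx2, comp_assoc. reflexivity.
Qed.

Lemma mapx_id (A B : T) : mapx (idm A) (idm B) = idm (prod A B).
Proof.
  apply prod_ext; rewrite ?mapx1, ?mapx2, !comp_id_l, comp_id_r; reflexivity.
Qed.

Definition lam {A B Z : T} (g : Hom (prod A B) Z) : Hom A (exp B Z) :=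
  proj1_sig (constructive_indefinite_description _ (exp_universal g)).

Lemma lam_ev {A B Z : T} (g : Hom (prod A B) Z) :
  ev B Z \o mapx (lam g) (idm B) = g.
Proof.
  unfold lam. destruct (proj2_sig (constructive_indefinite_description _ (exp_universal g))) as [H _].
  apply H. apply mapx1. rewrite mapx2, comp_id_l. reflexivity.
Qed.

Lemma lam_uniq {A B Z : T} (g : Hom (prod A B) Z) (h : Hom A (exp B Z)) :
  ev B Z \o mapx h (idm B) = g -> h = lam g.
Proof.
  intro E. unfold lam. destruct (proj2_sig (constructive_indefinite_description _ (exp_universal g))) as [_ U].
  symmetry. apply U. intros k E1 E2.
  assert (k = mapx h (idm B)) as ->.
  { apply prod_ext. rewrite mapx1; exact E1. rewrite mapx2, comp_id_l; exact E2. }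
  exact E.
Qed.

Lemma ev_inj {A B Z : T} (h h' : Hom A (exp B Z)) :
  ev B Z \o mapx h (idm B) = ev B Z \o mapx h' (idm B) -> h = h'.
Proof.
  intro E. rewrite (lam_uniq _ h eq_refl), (lam_uniq _ h' (eq_sym E)). reflexivity.
Qed.

Lemma precomp_ev {W X : T} (Z : T) (f : Hom W X) (u : Hom (exp X Z) (exp W Z))
  (Hu : is_exp_precomp f u) (V : T) (h : Hom V (exp X Z)) :
  ev W Z \o mapx (u \o h) (idm W) = ev X Z \o mapx h (idm X) \o mapx (idm V) f.
Proof.
  assert (E : ev W Z \o mapx u (idm W) = ev X Z \o mapx (idm _) f).
  { apply Hu. apply mapx1. rewrite mapx2, comp_id_l; reflexivity.
    rewrite mapx1, comp_id_l; reflexivity. apply mapx2. }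
  rewrite <- comp_assoc, mapx_comp, comp_id_l, comp_id_r.
  assert (mapx (u \o h) (idm W) = mapx u (idm W) \o mapx h (idm W)) as ->.
  { rewrite mapx_comp, comp_id_l. reflexivity. }
  rewrite comp_assoc, E, <- comp_assoc, mapx_comp.
  rewrite comp_id_l, comp_id_r. reflexivity.
Qed.

Definition u0 {W X : T} (Z : T) (f : Hom W X) : Hom (exp X Z) (exp W Z) :=
  lam (ev X Z \o mapx (idm (exp X Z)) f).

Lemma u0_precomp {W X : T} (Z : T) (f : Hom W X) : is_exp_precomp f (u0 Z f).
Proof.
  intros k l E1 E2 E3 E4.
  assert (k = mapx (u0 Z f) (idm W)) as ->.
  { apply prod_ext. rewrite mapx1; exact E1. rewrite mapx2, comp_id_l; exact E2. }
  assert (l = mapx (idm _) f) as ->.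
  { apply prod_ext. rewrite mapx1, comp_id_l; exact E3. rewrite mapx2; exact E4. }
  apply lam_ev.
Qed.

Definition PB {V W X : T} (Z : T) (f : Hom W X) : Prop :=
  (forall psi psi' : Hom (prod V X) Z,
      psi \o mapx (idm V) f = psi' \o mapx (idm V) f -> psi = psi') /\
  (forall kappa : Hom (prod V W) Z, exists psi, psi \o mapx (idm V) f = kappa).

Lemma orth_char {W X : T} (f : Hom W X) (Z : T) :
  internally_orthogonal f Z <-> forall V : T, @PB V W X Z f.
Proof.
  split.
  - intros [u [Hu [g [Hgu Hug]]]] V. split.
    + intros psi psi' E.
      rewrite <- (lam_ev psi), <- (lam_ev psi') in *.
      rewrite <- (precomp_ev Z f u Hu V (lam psi)), <- (precomp_ev Z f u Hu V (lam psi')) in E.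
      apply ev_inj in E.
      assert (g \o (u \o lam psi) = g \o (u \o lam psi')) as E' by (rewrite E; reflexivity).
      rewrite !comp_assoc, Hgu, !comp_id_l in E'. rewrite E'. reflexivity.
    + intros kappa. exists (ev X Z \o mapx (g \o lam kappa) (idm X)).
      rewrite <- (precomp_ev Z f u Hu V).
      rewrite comp_assoc, Hug, comp_id_l. apply lam_ev.
  - intros H. exists (u0 Z f). split. apply u0_precomp.
    destruct (proj2 (H (exp W Z)) (ev W Z)) as [psi Hpsi].
    assert (Hh : u0 Z f \o lam psi = idm _).
    { apply ev_inj. rewrite (precomp_ev Z f _ (u0_precomp Z f)).
      rewrite lam_ev, Hpsi, mapx_id, comp_id_r. reflexivity. }
    exists (lam psi). split; [|exact Hh].
    apply ev_inj. apply (proj1 (H (exp X Z))).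
    rewrite <- !(precomp_ev Z f _ (u0_precomp Z f)).
    rewrite comp_assoc, Hh, comp_id_l, comp_id_r. reflexivity.
Qed.

End Top.

Section Adj.
Context {S E : Topos} (pl : Functor E S) (pu : Functor S E) (a1 : Adjunction pl pu).

Definition tau {A : E} {B : S} (phi : Hom A (pu B)) : Hom (pl A) B :=
  counit a1 B \o fmap pl phi.

Lemma tau_inj {A : E} {B : S} (phi phi' : Hom A (pu B)) : tau phi = tau phi' -> phi = phi'.
Proof.
  intro H.
  assert (K : forall p : Hom A (pu B), p = fmap pu (tau p) \o unit a1 A).
  { intro p. unfold tau. rewrite fmap_comp, <- comp_assoc, unit_nat, comp_assoc,
      triangle_G, comp_id_l. reflexivity. }
  rewrite (K phi), (K phi'), H. reflexivity.
Qed.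

Lemma tau_surj {A : E} {B : S} (psi : Hom (pl A) B) : exists phi, tau phi = psi.
Proof.
  exists (fmap pu psi \o unit a1 A). unfold tau.
  rewrite fmap_comp, comp_assoc, <- counit_nat, <- comp_assoc, triangle_F, comp_id_r.
  reflexivity.
Qed.

Lemma tau_nat {A A' : E} {B : S} (phi : Hom A' (pu B)) (k : Hom A A') :
  tau (phi \o k) = tau phi \o fmap pl k.
Proof. unfold tau. rewrite fmap_comp, comp_assoc. reflexivity. Qed.

Lemma is_product_ext {C : Category} {A B P Z : C} (q1 : Hom P A) (q2 : Hom P B)
  (H : is_product q1 q2) (h h' : Hom Z P) :
  q1 \o h = q1 \o h' -> q2 \o h = q2 \o h' -> h = h'.
Proof.
  intros E1 E2. destruct (H Z (q1 \o h) (q2 \o h)) as [x [_ U]].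
  rewrite <- (U h (conj eq_refl eq_refl)), <- (U h' (conj (eq_sym E1) (eq_sym E2))).
  reflexivity.
Qed.

Hypothesis Hprod : preserves_binary_products pl.

Lemma fpr1 {V W X : E} (f : Hom W X) :
  fmap pl (pr1 V X) \o fmap pl (mapx (idm V) f) = fmap pl (pr1 V W).
Proof. rewrite <- fmap_comp, mapx1, comp_id_l. reflexivity. Qed.
Lemma fpr2 {V W X : E} (f : Hom W X) :
  fmap pl (pr2 V X) \o fmap pl (mapx (idm V) f) = fmap pl f \o fmap pl (pr2 V W).
Proof. rewrite <- !fmap_comp, mapx2. reflexivity. Qed.

Lemma step12 {W X : E} (f : Hom W X) :
  (forall V : E, @PB E V W X (pu (@Omega S)) f) -> is_iso (fmap pl f).
Proof.
  intro H.
  set (g := fmap pl f).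
  assert (Hmono : is_mono g).
  { intros Y a b Eab.
    set (Dl := fmap pl (pair (idm W) (idm W))).
    assert (D1 : fmap pl (pr1 W W) \o Dl = idm _).
    { unfold Dl. rewrite <- fmap_comp, pair1, fmap_id. reflexivity. }
    assert (D2 : fmap pl (pr2 W W) \o Dl = idm _).
    { unfold Dl. rewrite <- fmap_comp, pair2, fmap_id. reflexivity. }
    assert (mD : is_mono Dl).
    { intros Z c c' Ec.
      rewrite <- (comp_id_l c), <- (comp_id_l c'), <- D1, <- !comp_assoc, Ec. reflexivity. }
    destruct (classifier mD) as [chi [Hchi _]].
    destruct (tau_surj chi) as [phi Hphi].
    destruct (proj2 (H W) phi) as [psi Hpsi].
    assert (Echi : chi = tau psi \o fmap pl (mapx (idm W) f)).
    { rewrite <- Hphi, <- Hpsi, tau_nat. reflexivity. }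
    pose proof (Hprod _ _ _ _ _ (@prod_is_product E W W)) as PWW.
    pose proof (Hprod _ _ _ _ _ (@prod_is_product E W X)) as PWX.
    destruct (PWW Y a b) as [e [[Ea Eb] _]].
    assert (Em : fmap pl (mapx (idm W) f) \o e = fmap pl (mapx (idm W) f) \o Dl \o a).
    { apply (is_product_ext _ _ PWX).
      - rewrite !comp_assoc, !fpr1, Ea, D1, comp_id_l. reflexivity.
      - rewrite !comp_assoc, !fpr2, <- (comp_assoc g _ e), Eb.
        rewrite <- (comp_assoc g _ Dl), D2, comp_id_r. symmetry; exact Eab. }
    set (t := bang (pl W)).
    destruct (Hchi t) as [Pc Pu].
    destruct (Pu Y e (t \o a)) as [c [[Ec1 _] _]].
    { rewrite Echi. rewrite <- comp_assoc. rewrite Em. rewrite !comp_assoc. rewrite <- Echi. rewrite Pc. reflexivity. }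
    rewrite <- Ea, <- Eb, <- Ec1, !comp_assoc, D1, D2. reflexivity. }
  destruct (classifier Hmono) as [chi [Hchi _]].
  destruct (Hchi (bang _)) as [Pc Pu].
  assert (Hc : chi = tru \o bang (pl X)).
  { destruct (tau_surj (chi \o fmap pl (pr2 one X))) as [phi1 H1].
    destruct (tau_surj (tru \o bang (pl (prod one X)))) as [phi2 H2].
    assert (phi1 = phi2).
    { apply (proj1 (H one)). apply tau_inj. rewrite !tau_nat, H1, H2, <- (comp_assoc chi).
      rewrite <- fmap_comp, mapx2, fmap_comp, comp_assoc. fold g. rewrite Pc.
      rewrite <- !comp_assoc. f_equal. apply bang_uniq. }
    subst phi2.
    assert (Hs : fmap pl (pr2 one X) \o fmap pl (pair (bang X) (idm X)) = idm _).
    { rewrite <- fmap_comp, pair2, fmap_id. reflexivity. }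
    rewrite <- (comp_id_r chi), <- Hs, comp_assoc, <- H1, H2, <- comp_assoc.
    f_equal. apply bang_uniq. }
  destruct (Pu (pl X) (idm _) (bang _)) as [h [[Eh _] _]].
  { rewrite comp_id_r. exact Hc. }
  exists h. split; [|exact Eh].
  apply Hmono. rewrite comp_assoc, Eh, comp_id_l, comp_id_r. reflexivity.
Qed.

Lemma step23 {W X : E} (f : Hom W X) :
  is_iso (fmap pl f) -> forall (A : S) (V : E), @PB E V W X (pu A) f.
Proof.
  intros [g' [Hg1 Hg2]] A V.
  pose proof (Hprod _ _ _ _ _ (@prod_is_product E V W)) as PVW.
  pose proof (Hprod _ _ _ _ _ (@prod_is_product E V X)) as PVX.
  set (M := fmap pl (mapx (idm V) f)).
  destruct (PVW _ (fmap pl (pr1 V X)) (g' \o fmap pl (pr2 V X))) as [N [[N1 N2] _]].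
  assert (NM : N \o M = idm _).
  { apply (is_product_ext _ _ PVW).
    - unfold M. rewrite comp_assoc, N1, fpr1, comp_id_r. reflexivity.
    - unfold M. rewrite comp_assoc, N2, <- comp_assoc, fpr2, comp_assoc, Hg1, comp_id_l, comp_id_r.
      reflexivity. }
  assert (MN : M \o N = idm _).
  { apply (is_product_ext _ _ PVX).
    - unfold M. rewrite comp_assoc, fpr1, N1, comp_id_r. reflexivity.
    - unfold M. rewrite comp_assoc, fpr2, <- comp_assoc, N2, comp_assoc, Hg2, comp_id_l, comp_id_r.
      reflexivity. }
  split.
  - intros psi psi' Ep. apply tau_inj.
    assert (tau (psi \o mapx (idm V) f) \o N = tau (psi' \o mapx (idm V) f) \o N) as K
      by (rewrite Ep; reflexivity).
    rewrite !tau_nat in K. fold M in K. rewrite <- !comp_assoc, MN, !comp_id_r in K.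
    exact K.
  - intros kappa. destruct (tau_surj (tau kappa \o N)) as [psi Hpsi].
    exists psi. apply tau_inj. rewrite tau_nat, Hpsi. fold M.
    rewrite <- comp_assoc, NM, comp_id_r. reflexivity.
Qed.

End Adj.

Theorem lemma3p1 (S E : Topos)
    (pl : Functor E S) (pu : Functor S E) (ps : Functor E S) (pb : Functor S E)
    (a1 : Adjunction pl pu) (a2 : Adjunction pu ps) (a3 : Adjunction ps pb)
    (Hp : pre_cohesive a1 a2 a3)
    (W X : E) (f : Hom W X) :
  (internally_orthogonal f (pu (@Omega S)) <-> is_iso (fmap pl f)) /\
  (is_iso (fmap pl f) <-> (forall A : S, internally_orthogonal f (pu A))).
Proof.
  destruct Hp as [_ [_ [_ [_ [_ Hprod]]]]].
  split; split.
  - intro H. apply (step12 _ _ a1 Hprod). apply orth_char. exact H.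
  - intro H. apply orth_char. apply (step23 _ _ a1 Hprod). exact H.
  - intros H A. apply orth_char. apply (step23 _ _ a1 Hprod). exact H.
  - intro H. apply (step12 _ _ a1 Hprod). apply orth_char. apply H.
Qed.
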